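(* The formal power series $G(z)=\sum_{n\ge3}G_n(t)\frac{z^{n-1}}{(n-1)!}\in\mathbb Z[t][[z]]$ is the unique formal power series solution of \[ \frac{dG}{dz}=\frac{z+G}{1-tG} \] satisfying $G(0)=0$.
   Context: $P_n(t)$ ($n\ge3$) is defined by $P_3=1$ and $P_n(t)=P_{n-1}(t)(1+t)+t\sum_{i=3}^{n-2}\binom{n-2}{i-1}P_i(t)P_{n+1-i}(t)$ for $n>3$; it is symmetric with center $(n-3)/2$. For $f$ symmetric with center $d/2$, written uniquely as $f(t)=\sum_{i=0}^{\lfloor d/2\rfloor}\gamma_it^i(1+t)^{d-2i}$, $\gamma(f):=\sum_i\gamma_it^i$. $G_n:=\gamma(P_n)$. *)

(* Defs.v *)
From HB Require Import structures.
From mathcomp Require Import all_boot all_order all_algebra.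
From Stdlib Require Import ClassicalEpsilon.
Set Implicit Arguments. Unset Strict Implicit. Unset Printing Implicit Defensive.
Import Order.TTheory GRing.Theory Num.Theory.
Local Open Scope ring_scope.

(* Pseq k = [:: P_3; P_4; ...; P_(k+3)] *)
Fixpoint Pseq (k : nat) : seq {poly int} :=
  match k with
  | 0 => [:: 1]
  | k'.+1 =>
      let s := Pseq k' in
      let n := k'.+4 in
      rcons s (s`_k' * (1 + 'X)
               + 'X * \sum_(3 <= i < n - 1)
                        ('C(n - 2, i - 1))%:R * s`_(i - 3) * s`_(n + 1 - i - 3))
  end.

(* P n = P_n(t) for n >= 3 (meaningless for n < 3) *)
Definition P (n : nat) : {poly int} := (Pseq (n - 3))`_(n - 3).

Definition is_gamma (d : nat) (f g : {poly int}) : Prop :=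
  (size g <= (d./2).+1)%N /\
  f = \sum_(i < (d./2).+1) g`_i *: ('X^i * (1 + 'X) ^+ (d - 2 * i)).

(* gamma(f) for f symmetric with center d/2 (the unique g with is_gamma d f g) *)
Definition gamma (d : nat) (f : {poly int}) : {poly int} :=
  epsilon (inhabits 0) (is_gamma d f).

(* G_n = gamma(P_n), P_n symmetric with center (n-3)/2 *)
Definition Gam (n : nat) : {poly int} := gamma (n - 3) (P n).

Section PS.
Variable R : comUnitRingType.
Definition ps := nat -> R.
Definition ps_one : ps := fun n => (n == 0%N)%:R.
Definition ps_z : ps := fun n => (n == 1%N)%:R.
Definition ps_add (a b : ps) : ps := fun n => a n + b n.
Definition ps_sub (a b : ps) : ps := fun n => a n - b n.
Definition ps_cmul (c : R) (a : ps) : ps := fun n => c * a n.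
Definition ps_mul (a b : ps) : ps := fun n => \sum_(i < n.+1) a i * b (n - i)%N.
Definition ps_deriv (a : ps) : ps := fun n => a n.+1 *+ n.+1.
(* multiplicative inverse (meaningful when a 0 is a unit):
   b_0 = a_0^-1, b_m = - a_0^-1 * sum_{k=1}^m a_k b_(m-k) *)
Fixpoint ps_inv_seq (a : ps) (n : nat) : seq R :=
  match n with
  | 0 => [:: (a 0%N)^-1]
  | n'.+1 =>
      let s := ps_inv_seq a n' in
      rcons s (- (a 0%N)^-1 * \sum_(k < n'.+1) a k.+1 * s`_(n' - k))
  end.
Definition ps_inv (a : ps) : ps := fun n => (ps_inv_seq a n)`_n.
Definition ps_div (a b : ps) : ps := ps_mul a (ps_inv b).
End PS.
Arguments ps_one {R}.
Arguments ps_z {R}.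

(* coefficient of z^m is G_(m+1)/m! for m >= 2, and 0 for m = 0, 1 *)
Definition Gser : ps {poly rat} := fun m =>
  if (2 <= m)%N then (m`!%:R)^-1 *: map_poly intr (Gam m.+1) else 0.

Definition ode_rhs (G : ps {poly rat}) : ps {poly rat} :=
  ps_div (ps_add ps_z G) (ps_sub ps_one (ps_cmul 'X G)).

(* Main.v *)
Require Import Defs.
From HB Require Import structures.
From mathcomp Require Import all_boot all_order all_algebra.
From mathcomp Require Import zify ring lra.
From Stdlib Require Import FunctionalExtensionality ClassicalEpsilon.
Set Implicit Arguments. Unset Strict Implicit. Unset Printing Implicit Defensive.
Import Order.TTheory GRing.Theory Num.Theory.
Local Open Scope ring_scope.

Fixpoint Gseq (a : {poly int}) (k : nat) : seq {poly int} :=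
  match k with
  | 0 => [:: 1]
  | k'.+1 =>
      let s := Gseq a k' in
      let n := k'.+4 in
      rcons s (s`_k' * a
               + 'X * \sum_(3 <= i < n - 1)
                        ('C(n - 2, i - 1))%:R * s`_(i - 3) * s`_(n + 1 - i - 3))
  end.

Lemma Pseq_G k : Pseq k = Gseq (1 + 'X) k.
Proof. by elim: k => //= k ->. Qed.

Lemma size_Gseq a k : size (Gseq a k) = k.+1.
Proof. by elim: k => //= k IH; rewrite size_rcons IH. Qed.

Lemma Gseq_pre a k m j : (j <= k)%N -> (k <= m)%N -> (Gseq a m)`_j = (Gseq a k)`_j.
Proof.
move=> jk; elim: m => [|m IH]; first by rewrite leqn0 => /eqP ->.
rewrite leq_eqVlt => /orP [/eqP <- //|]; rewrite ltnS => km.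
by rewrite /= nth_rcons size_Gseq ltnS (leq_trans jk km) IH.
Qed.

Definition F a n := (Gseq a (n - 3))`_(n - 3).

Lemma F3 a : F a 3 = 1. Proof. by []. Qed.

Lemma Gseq_F a k j : (j <= k)%N -> (Gseq a k)`_j = F a (j + 3).
Proof. by move=> jk; rewrite /F addnK (Gseq_pre _ (leqnn j) jk). Qed.

Lemma F_rec a n : (3 <= n)%N ->
  F a n.+1 = F a n * a + 'X * \sum_(3 <= i < n)
     ('C(n - 1, i - 1))%:R * F a i * F a (n + 2 - i).
Proof.
move=> n3; rewrite /F.
have -> : (n.+1 - 3 = (n - 3).+1)%N by lia.
rewrite /= nth_rcons size_Gseq ltnn eqxx.
have -> : ((n - 3).+4 - 1 = n)%N by lia.
have -> : ((n - 3).+4 - 2 = n - 1)%N by lia.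
congr (_ + _ * _).
apply: eq_big_nat => i /andP [i3 iN].
rewrite (@Gseq_F a (n - 3) (i - 3)); last by lia.
rewrite (@Gseq_F a (n - 3) ((n - 3).+4 + 1 - i - 3)); last by lia.
rewrite (@Gseq_F a (i - 3) (i - 3)) // (@Gseq_F a (n + 2 - i - 3) (n + 2 - i - 3)) //.
have -> : (i - 3 + 3 = i)%N by lia.
have -> : ((n - 3).+4 + 1 - i - 3 + 3 = n + 2 - i)%N by lia.
by have -> : (n + 2 - i - 3 + 3 = n + 2 - i)%N by lia.
Qed.

Definition T d (g : {poly int}) : {poly int} :=
  \sum_(i < (d./2).+1) g`_i *: ('X^i * (1 + 'X) ^+ (d - 2 * i)).

Definition ev (p : {poly int}) (x : rat) : rat := (map_poly intr p).[x].

Lemma evD p q x : ev (p + q) x = ev p x + ev q x.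
Proof. by rewrite /ev rmorphD hornerD. Qed.
Lemma evM p q x : ev (p * q) x = ev p x * ev q x.
Proof. by rewrite /ev rmorphM hornerM. Qed.
Lemma evX x : ev 'X x = x.
Proof. by rewrite /ev map_polyX hornerX. Qed.
Lemma ev1 x : ev 1 x = 1.
Proof. by rewrite /ev rmorph1 hornerC. Qed.
Lemma evn n x : ev n%:R x = n%:R.
Proof. by rewrite /ev rmorph_nat hornerMn hornerC. Qed.
Lemma evsum (I : Type) (r : seq I) (P : pred I) (f : I -> {poly int}) x :
  ev (\sum_(i <- r | P i) f i) x = \sum_(i <- r | P i) ev (f i) x.
Proof. by rewrite /ev rmorph_sum horner_sum. Qed.

Lemma evT d (g : {poly int}) (x : rat) : (size g <= (d./2).+1)%N -> 1 + x != 0 ->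
  ev (T d g) x = (1 + x) ^+ d * ev g (x / (1 + x) ^+ 2).
Proof.
move=> sg vn0; rewrite /T evsum /ev (@horner_coef_wide _ (d./2).+1); last first.
  by rewrite size_map_inj_poly //; exact: intr_inj.
rewrite mulr_sumr; apply: eq_bigr => i _.
rewrite map_polyZ hornerZ !(rmorphM, rmorphXn, rmorphD, rmorph1, map_polyX, map_polyXn) /= !hornerE.
rewrite map_polyX hornerX coef_map /=.
have i2 : (2 * i <= d)%N.
  have : (i < d./2.+1)%N := ltn_ord i.
  move: (nat_of_ord i) => k; rewrite -divn2; lia.
set v := 1 + x.
have -> : v ^+ d = v ^+ (d - 2 * i) * (v ^+ 2) ^+ i by rewrite -exprM -exprD subnK.
rewrite expr_div_n.
have h : (v ^+ 2) ^+ i != 0 by rewrite !expf_neq0.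
field; done.
Qed.

Lemma poly_eq_pts (p q : {poly int}) (f : nat -> rat) :
  (forall a b, (2 <= a)%N -> (2 <= b)%N -> f a = f b -> a = b) ->
  (forall k, (2 <= k)%N -> ev p (f k) = ev q (f k)) -> p = q.
Proof.
move=> finj pq; apply: (map_inj_poly (@intr_inj rat) (rmorph0 _)).
apply/eqP; rewrite -subr_eq0; apply/eqP.
set r := _ - _.
apply: (@roots_geq_poly_eq0 _ r [seq f k | k <- iota 2 (size r)]).
- apply/allP => y /mapP [k]; rewrite mem_iota => /andP [k2 _] ->.
  by rewrite /root /r hornerD hornerN -/(ev p _) -/(ev q _) pq // subrr.
- rewrite map_inj_in_uniq ?iota_uniq // => a b.
  by rewrite !mem_iota => /andP [a2 _] /andP [b2 _]; apply: finj.
- by rewrite size_map size_iota.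
Qed.

Lemma ev_inj (p q : {poly int}) : (forall k : nat, ev p k%:R = ev q k%:R) -> p = q.
Proof.
move=> h; apply: (@poly_eq_pts _ _ (fun k => k%:R)) => // a b _ _ /eqP.
by rewrite eqr_nat => /eqP.
Qed.

Definition uu (k : nat) : rat := k%:R / (1 + k%:R) ^+ 2.

Lemma one_add_nat_neq0 (k : nat) : 1 + k%:R != 0 :> rat.
Proof. by rewrite -[1]/(1%:R) -natrD pnatr_eq0. Qed.

Lemma uu_inj a b : (2 <= a)%N -> (2 <= b)%N -> uu a = uu b -> a = b.
Proof.
move=> a2 b2; rewrite /uu => h.
have ha := one_add_nat_neq0 a; have hb := one_add_nat_neq0 b.
have : (a * (1 + b) ^ 2)%N%:R = (b * (1 + a) ^ 2)%N%:R :> rat.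
  rewrite !natrM !natrD -!expr2.
  have ha2 : (1 + a%:R) ^+ 2 != 0 :> rat by rewrite expf_neq0.
  have hb2 : (1 + b%:R) ^+ 2 != 0 :> rat by rewrite expf_neq0.
  by move/eqP: h; rewrite eqr_div // => /eqP ->; rewrite mulrC.
move/eqP; rewrite eqr_nat => /eqP; nia.
Qed.

Lemma T_inj d (g1 g2 : {poly int}) : (size g1 <= (d./2).+1)%N ->
  (size g2 <= (d./2).+1)%N -> T d g1 = T d g2 -> g1 = g2.
Proof.
move=> s1 s2 e; apply: (poly_eq_pts uu_inj) => k _.
have h := one_add_nat_neq0 k.
have := congr1 (fun p => ev p k%:R) e; rewrite /= !evT // => /eqP.
rewrite -subr_eq0 -mulrBr mulf_eq0 expf_eq0 (negbTE h) andbF /= subr_eq0.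
by move/eqP.
Qed.

Definition Q n := F 1 n.

Lemma PF n : P n = F (1 + 'X) n.
Proof. by rewrite /P /F Pseq_G. Qed.

Lemma size_natr (c : nat) : (size (c%:R : {poly int}) <= 1)%N.
Proof. by rewrite -polyC_natr size_polyC_leq1. Qed.

Lemma size_Q n : (3 <= n)%N -> (size (Q n) <= ((n - 3)./2).+1)%N.
Proof.
move=> n3; suff H : forall N m, (m <= N)%N -> (3 <= m)%N ->
    (size (Q m) <= ((m - 3)./2).+1)%N by exact: (H n).
clear n n3.
elim=> [|n IH] m; first by lia.
rewrite leq_eqVlt => /orP [/eqP ->|]; last by rewrite ltnS; apply: IH.
move=> n3'; case: (eqVneq n 2) => [->|n2]; first by rewrite /Q F3 size_poly1.
have {n2 n3'} n3 : (3 <= n)%N by lia.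
rewrite /Q F_rec // -/(Q n).
apply: (leq_trans (size_polyD _ _)); rewrite geq_max; apply/andP; split.
  rewrite mulr1 (leq_trans (IH n (leqnn n) n3)) //; rewrite -!divn2; lia.
apply: (leq_trans (size_polyMleq _ _)); rewrite size_polyX (_ : 2%R = 2%N) //.
suff : (size (\sum_(3 <= i < n) 'C(n - 1, i - 1)%:R * F 1 i * F 1 (n + 2 - i))%R
          <= ((n - 2) %/ 2))%N.
  by rewrite -!divn2; lia.
rewrite big_nat_cond; apply: (big_ind (fun p : {poly int} => size p <= ((n - 2) %/ 2))%N).
- by rewrite size_poly0.
- move=> p q hp hq; apply: (leq_trans (size_polyD _ _)); by rewrite geq_max hp hq.
move=> i /andP [/andP [i3 iN] _].
have h1 := IH i (ltnW iN) i3.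
have h2 := IH (n + 2 - i)%N ltac:(lia) ltac:(lia).
rewrite -/(Q i) -/(Q (n + 2 - i)).
apply: (leq_trans (size_polyMleq _ _)).
have h3 := size_polyMleq ('C(n - 1, i - 1)%:R : {poly int}) (Q i).
have h4 := size_natr 'C(n - 1, i - 1).
move: h1 h2 h3 h4; rewrite -!divn2; lia.
Qed.

Lemma P_T n : (3 <= n)%N -> P n = T (n - 3) (Q n).
Proof.
move=> n3; suff H : forall N m, (m <= N)%N -> (3 <= m)%N -> P m = T (m - 3) (Q m)
  by exact: (H n).
clear n n3.
elim=> [|n IH] m; first by lia.
rewrite leq_eqVlt => /orP [/eqP ->|]; last by rewrite ltnS; apply: IH.
move=> n3'; case: (eqVneq n 2) => [->|n2].
  by rewrite PF /Q !F3 /T big_ord1 /= coefC /= scale1r mulr1.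
have {n2 n3'} n3 : (3 <= n)%N by lia.
apply: ev_inj => k; set x := (k%:R : rat).
have vn0 : 1 + x != 0 by exact: one_add_nat_neq0.
set v := 1 + x; set u := x / v ^+ 2.
have evP : forall j, (3 <= j)%N -> (j <= n)%N -> ev (P j) x = v ^+ (j - 3) * ev (Q j) u.
  by move=> j j3 jn; rewrite (IH j jn j3) evT // size_Q.
rewrite evT ?size_Q //; last by lia.
rewrite -/v -/u PF /Q !F_rec // -PF -/(Q n) evD evM evP // evD ev1 evX.
rewrite !evD !evM !ev1 !evX -/v -/(Q n) [RHS]mulrDr; congr (_ + _).
  have -> : (n.+1 - 3 = (n - 3).+1)%N by lia.
  by rewrite exprS -/v; ring.
rewrite !evsum mulrA !mulr_sumr; apply: eq_big_nat => i /andP [i3 iN].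
rewrite -PF -PF !evM evn evP //; last by lia.
rewrite evP; [|lia|lia].
have hx : x = u * v ^+ 2 by rewrite /u divfK // expf_neq0.
have hv : v ^+ (n.+1 - 3) = v ^+ (i - 3) * v ^+ (n + 2 - i - 3) * v ^+ 2.
  by rewrite -!exprD; congr (_ ^+ _); lia.
rewrite {1}hx hv -/(Q i) -/(Q (n + 2 - i)) evn; ring.
Qed.



Lemma Gam_Q n : (3 <= n)%N -> Gam n = Q n.
Proof.
move=> n3; rewrite /Gam /gamma.
have ex : exists g, is_gamma (n - 3) (P n) g.
  by exists (Q n); split; [exact: size_Q | exact: P_T].
have [s e] := epsilon_spec (inhabits 0) (is_gamma (n - 3) (P n)) ex.
apply: (@T_inj (n - 3)) => //; first exact: size_Q.
by rewrite -P_T.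
Qed.

Section PSL.
Variable R : comUnitRingType.
Implicit Types a b c : ps R.

Definition tr (a : ps R) N : {poly R} := \poly_(i < N) a i.

Lemma ps_mulE a b n N : (n < N)%N -> ps_mul a b n = (tr a N * tr b N)`_n.
Proof.
move=> nN; rewrite coefM /ps_mul; apply: eq_bigr => i _.
rewrite !coef_poly (leq_ltn_trans _ nN) ?leq_ord //.
by rewrite (leq_ltn_trans _ nN) ?leq_subr.
Qed.

Lemma coefM_eql (p q r : {poly R}) n :
  (forall j, (j <= n)%N -> p`_j = q`_j) -> (p * r)`_n = (q * r)`_n.
Proof. by move=> h; rewrite !coefM; apply: eq_bigr => i _; rewrite h // -ltnS. Qed.

Lemma ps_mulC a b : ps_mul a b = ps_mul b a.
Proof.
by apply: functional_extensionality => n; rewrite !(ps_mulE _ _ (ltnSn n)) mulrC.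
Qed.

Lemma ps_mulA a b c : ps_mul (ps_mul a b) c = ps_mul a (ps_mul b c).
Proof.
apply: functional_extensionality => n.
rewrite (ps_mulE _ _ (ltnSn n)) (ps_mulE a _ (ltnSn n)).
rewrite (@coefM_eql (tr (ps_mul a b) n.+1) (tr a n.+1 * tr b n.+1)); last first.
  by move=> j jn; rewrite coef_poly ltnS jn; apply: ps_mulE; rewrite ltnS.
rewrite [in RHS]mulrC.
rewrite (@coefM_eql (tr (ps_mul b c) n.+1) (tr b n.+1 * tr c n.+1)); last first.
  by move=> j jn; rewrite coef_poly ltnS jn; apply: ps_mulE; rewrite ltnS.
by rewrite [in RHS]mulrC mulrA.
Qed.

Lemma ps_mul1 a : ps_mul a ps_one = a.
Proof.
apply: functional_extensionality => n.
rewrite /ps_mul big_ord_recr /= subnn /ps_one eqxx mulr1 big1 ?add0r //.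
move=> i _; rewrite subn_eq0 leqNgt ltn_ord /= mulr0 //.
Qed.

Lemma ps_inv_seq_size b n : size (ps_inv_seq b n) = n.+1.
Proof. by elim: n => //= n IH; rewrite size_rcons IH. Qed.

Lemma ps_inv_seq_pre b n m j : (j <= n)%N -> (n <= m)%N ->
  (ps_inv_seq b m)`_j = (ps_inv_seq b n)`_j.
Proof.
move=> jn; elim: m => [|m IH]; first by rewrite leqn0 => /eqP ->.
rewrite leq_eqVlt => /orP [/eqP <- //|]; rewrite ltnS => nm.
by rewrite /= nth_rcons ps_inv_seq_size ltnS (leq_trans jn nm) IH.
Qed.

Lemma ps_invS b n : ps_inv b n.+1 =
  - (b 0%N)^-1 * \sum_(k < n.+1) b k.+1 * ps_inv b (n - k)%N.
Proof.
rewrite /ps_inv /= nth_rcons ps_inv_seq_size ltnn eqxx; congr (_ * _).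
apply: eq_bigr => k _; congr (_ * _).
by rewrite (@ps_inv_seq_pre b (n - k)%N n) // leq_subr.
Qed.

Lemma ps_mul_inv b : b 0%N = 1 -> ps_mul b (ps_inv b) = ps_one.
Proof.
move=> b0; apply: functional_extensionality => n.
case: n => [|n].
  by rewrite /ps_mul big_ord1 /ps_inv /= b0 invr1 mulr1.
rewrite /ps_mul big_ord_recl /= b0 mul1r subn0 ps_invS b0 invr1 mulN1r.
rewrite (_ : \sum_(i < n.+1) _ = \sum_(k < n.+1) b k.+1 * ps_inv b (n - k)%N).
  by rewrite addNr.
by apply: eq_bigr => i _; rewrite /bump /= add1n subSS.
Qed.

Lemma ps_mul_sub (a : ps R) (c : R) (h : ps R) n :
  ps_mul a (ps_sub ps_one (ps_cmul c h)) n = a n - c * ps_mul a h n.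
Proof.
rewrite /ps_mul /ps_sub /ps_cmul.
under eq_bigr do rewrite mulrBr.
rewrite sumrB; congr (_ - _).
  by have := congr1 (fun f => f n) (ps_mul1 a).
rewrite mulr_sumr; apply: eq_bigr => i _; ring.
Qed.

End PSL.

Definition q n : {poly rat} := map_poly intr (Q n).

Lemma q3 : q 3 = 1.
Proof. by rewrite /q /Q F3 rmorph1. Qed.

Lemma q_rec n : (3 <= n)%N -> q n.+1 =
  q n + 'X * \sum_(3 <= i < n) ('C(n - 1, i - 1))%:R * q i * q (n + 2 - i).
Proof.
move=> n3; rewrite /q /Q F_rec // mulr1 rmorphD rmorphM /= map_polyX rmorph_sum.
congr (_ + _ * _); apply: eq_bigr => i _.
by rewrite !rmorphM rmorph_nat.
Qed.

Lemma GE m : (2 <= m)%N -> Gser m = (m`!%:R)^-1 *: q m.+1.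
Proof. by move=> m2; rewrite /Gser m2 Gam_Q. Qed.

Lemma fact_neq0 m : (m`!%:R : rat) != 0.
Proof. by rewrite pnatr_eq0 -lt0n fact_gt0. Qed.

Lemma DGE m : (1 <= m)%N -> ps_deriv Gser m = (m`!%:R)^-1 *: q m.+2.
Proof.
move=> m1; rewrite /ps_deriv GE // -scaler_nat scalerA; congr (_ *: _).
rewrite factS natrM.
have h1 := fact_neq0 m; have h2 : (m.+1%:R : rat) != 0 by rewrite pnatr_eq0.
by field; rewrite h1 one_add_nat_neq0.
Qed.

Lemma DG0 : ps_deriv Gser 0 = 0.
Proof. by rewrite /ps_deriv /Gser /= mulr1n. Qed.

Lemma Grec n : ps_deriv Gser n =
  ps_z n + Gser n + 'X * ps_mul Gser (ps_deriv Gser) n.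
Proof.
have G0 : Gser 0 = 0 by [].
have G1 : Gser 1 = 0 by [].
case: n => [|[|n]].
- by rewrite DG0 /ps_z /ps_mul big_ord1 /= G0 DG0 !mulr0 !addr0.
- rewrite DGE // /= invr1 scale1r q3 /ps_z /= G1 addr0.
  by rewrite /ps_mul big_ord_recr big_ord1 /= DG0 G0 G1 !mul0r add0r mulr0 addr0.
set N := n.+2.
rewrite DGE // q_rec // /ps_z /= add0r GE // scalerDr; congr (_ + _).
rewrite scalerAr; congr (_ * _).
rewrite /ps_mul -(big_mkord xpredT (fun j => Gser j * ps_deriv Gser (N - j)%N)).
rewrite [in RHS]big_nat_recr //= subnn DG0 mulr0 addr0.
rewrite [in RHS]big_ltn // [in RHS]big_ltn // G0 G1 !mul0r !add0r.
have -> : (N.+1 + 2 = N.+3)%N by lia.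
rewrite (big_add1 _ _ 2 N.+1) /= scaler_sumr.
apply: eq_big_nat => j /andP [j2 jN].
rewrite GE // DGE; last by lia.
have -> : (N.+1 - 1 = N)%N by lia.
have -> : (N.+3 - j.+1 = (N - j).+2)%N by lia.
have -> : (j.+1 - 1 = j)%N by lia.
rewrite -mulrA mulr_natl -scaler_nat scalerA -scalerAl -scalerAr scalerA.
congr (_ *: _).
have jn : (j <= N)%N by lia.
rewrite -(bin_fact jn) !natrM.
have h1 := fact_neq0 j; have h2 := fact_neq0 (N - j).
have h3 : ('C(N, j)%:R : rat) != 0 by rewrite pnatr_eq0 -lt0n bin_gt0.
by field; rewrite h1 h2 h3.
Qed.

Definition bb (H : ps {poly rat}) := ps_sub ps_one (ps_cmul 'X H).

Lemma bb0 H : H 0%N = 0 -> bb H 0%N = 1.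
Proof. by move=> h; rewrite /bb /ps_sub /ps_cmul h mulr0 subr0. Qed.

Lemma rec_ode (H : ps {poly rat}) : H 0%N = 0 ->
  (forall n, ps_deriv H n = ps_z n + H n + 'X * ps_mul H (ps_deriv H) n) ->
  forall n, ps_deriv H n = ode_rhs H n.
Proof.
move=> h0 hr.
have e : ps_add ps_z H = ps_mul (ps_deriv H) (bb H).
  apply: functional_extensionality => n.
  by rewrite /bb ps_mul_sub ps_mulC hr /ps_add; ring.
move=> n; rewrite /ode_rhs /ps_div -/(bb H) e ps_mulA ps_mul_inv ?bb0 //.
by rewrite ps_mul1.
Qed.

Lemma ode_rec (H : ps {poly rat}) : H 0%N = 0 -> (forall n, ps_deriv H n = ode_rhs H n) ->
  forall n, ps_deriv H n = ps_z n + H n + 'X * ps_mul H (ps_deriv H) n.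
Proof.
move=> h0 hr.
have e : ps_deriv H = ps_mul (ps_add ps_z H) (ps_inv (bb H)).
  by apply: functional_extensionality => n; rewrite hr.
have e2 : ps_mul (ps_deriv H) (bb H) = ps_add ps_z H.
  by rewrite e ps_mulA [ps_mul (ps_inv _) _]ps_mulC ps_mul_inv ?bb0 // ps_mul1.
move=> n; have := congr1 (fun f : ps {poly rat} => f n) e2.
rewrite /= /bb ps_mul_sub ps_mulC /ps_add => <-; ring.
Qed.

Lemma rec_uniq (H K : ps {poly rat}) : H 0%N = 0 -> K 0%N = 0 ->
  (forall n, ps_deriv H n = ps_z n + H n + 'X * ps_mul H (ps_deriv H) n) ->
  (forall n, ps_deriv K n = ps_z n + K n + 'X * ps_mul K (ps_deriv K) n) ->
  forall n, H n = K n.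
Proof.
move=> h0 k0 hr kr n.
suff S : forall N m, (m <= N)%N -> H m = K m by exact: (S n).
elim=> [|N IH] m; first by rewrite leqn0 => /eqP ->; rewrite h0 k0.
rewrite leq_eqVlt => /orP [/eqP ->|]; last by rewrite ltnS; apply: IH.
have := hr N; have := kr N; rewrite /ps_deriv => eK eH.
have : H N.+1 *+ N.+1 = K N.+1 *+ N.+1.
  rewrite eH eK IH //; congr (_ + 'X * _).
  apply: eq_bigr => i _.
  have iN := ltn_ord i.
  case: (posnP i) => [->|ip]; first by rewrite h0 k0 !mul0r.
  by rewrite !IH //; lia.
rewrite -!scaler_nat => /(scalerI _); apply; by rewrite pnatr_eq0.
Qed.

Theorem mainTheorem6 :
  (Gser 0%N = 0 /\ (forall n, ps_deriv Gser n = ode_rhs Gser n)) /\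
  (forall H : ps {poly rat},
     H 0%N = 0 -> (forall n, ps_deriv H n = ode_rhs H n) ->
     forall n, H n = Gser n).
Proof.
have G0 : Gser 0 = 0 by [].
split; first by split => //; apply: rec_ode => //; exact: Grec.
move=> H h0 hode; apply: rec_uniq => //; last exact: Grec.
exact: ode_rec.
Qed.
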